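(* Let $x, y, p \in \mathbb{Z}$ with $p \geq 3$ a prime such that $x^2 - 2 = y^p$. Then there exist $a, b, r \in \mathbb{Z}$ with $|r| \leq \frac{p-1}{2}$ such that $$x + \sqrt{2} = (1+\sqrt{2})^r (a + b\sqrt{2})^p.$$ Hence the integers $a, b$ satisfy $$\frac{1}{2\sqrt{2}}\left((1+\sqrt{2})^r (a+b\sqrt{2})^p - (1-\sqrt{2})^r (a - b\sqrt{2})^p\right) = 1.$$ *)

(* Defs.v *)
From mathcomp Require Export all_boot all_order all_algebra.
From mathcomp Require Export reals.
Export Order.TTheory GRing.Theory Num.Theory.
Local Open Scope ring_scope.

Definition sqrt2 {R : realType} : R := Num.sqrt 2.

(* Main.v *)
Require Import Defs.
From mathcomp Require Import all_boot all_order all_algebra reals.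
From mathcomp Require Import zify ring lra.
Import Order.TTheory GRing.Theory Num.Theory.
Local Open Scope ring_scope.

Definition Z2 := (int * int)%type.
Definition zmul (z w : Z2) : Z2 := (z.1 * w.1 + 2 * z.2 * w.2, z.1 * w.2 + z.2 * w.1).
Definition zadd (z w : Z2) : Z2 := (z.1 + w.1, z.2 + w.2).
Definition zopp (z : Z2) : Z2 := (- z.1, - z.2).
Definition zconj (z : Z2) : Z2 := (z.1, - z.2).
Definition z1 : Z2 := (1, 0).
Definition nrm (z : Z2) : int := z.1 ^+ 2 - 2 * z.2 ^+ 2.
Fixpoint zpow (z : Z2) (n : nat) : Z2 := if n is n'.+1 then zmul z (zpow z n') else z1.
Definition zsub a b := zadd a (zopp b).
Definition zdvd (d z : Z2) := exists k, z = zmul d k.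

Ltac zr := repeat match goal with | z : Z2 |- _ => destruct z | z : (int*int)%type |- _ => destruct z end;
  rewrite ?/zsub /zmul /zadd /zopp /zconj /z1 /nrm /=; try (congr pair); ring.

Lemma nrm_mul z w : nrm (zmul z w) = nrm z * nrm w. Proof. zr. Qed.

Lemma nat_irr (m n : nat) : (m ^ 2 = 2 * n ^ 2)%N -> n = 0%N.
Proof.
move=> h; case: (posnP n) => // np.
have mp : (0 < m)%N.
  case: (posnP m) => // m0; move: h; rewrite m0 => h.
  have : (0 < 2 * n ^ 2)%N by rewrite muln_gt0 expn_gt0 np.
  by rewrite -h.
have := congr1 (logn 2) h.
rewrite lognM ?expn_gt0 ?np // !lognX (@logn_prime 2 2) //= => e.
lia.
Qed.

Lemma int_irr (a b : int) : a ^+ 2 - 2 * b ^+ 2 = 0 -> a = 0 /\ b = 0.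
Proof.
move=> h.
have h2 : (`|a| ^ 2 = 2 * `|b| ^ 2)%N.
  have h' : a ^+ 2 = 2 * b ^+ 2 by lia.
  by have := congr1 absz h'; rewrite abszM !abszX.
have b0 := nat_irr _ _ h2.
have ha : (`|a| = 0)%N.
  by move: h2; rewrite b0 muln0 => /eqP; rewrite expn_eq0 => /andP[/eqP].
split; lia.
Qed.

Lemma nrm0 z : nrm z = 0 -> z = (0, 0).
Proof. case: z => a b; rewrite /nrm /= => /int_irr [-> ->] //. Qed.

Lemma round (w n : int) : n != 0 -> exists q, 2 * `|w - q * n| <= `|n|.
Proof.
move=> n0.
have e := divz_eq w n. have g := modz_ge0 w n0. have l := ltz_mod w n0.
set q := (w %/ n)%Z in e *; set r := (w %% n)%Z in e g l *.
case: (lerP (2 * r) `|n|) => hr.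
  exists q; have -> : w - q * n = r by lia.
  by rewrite ger0_norm.
case: (ltrP 0 n) => hn.
  exists (q + 1); lia.
exists (q - 1); lia.
Qed.

Lemma eucl_int (m n s1 s2 : int) : n != 0 -> m * n = s1 ^+ 2 - 2 * s2 ^+ 2 ->
  2 * `|s1| <= `|n| -> 2 * `|s2| <= `|n| -> `|m| < `|n|.
Proof.
move=> n0 e h1 h2.
have a1 : 4 * s1 ^+ 2 <= n ^+ 2 by nia.
have a2 : 4 * s2 ^+ 2 <= n ^+ 2 by nia.
have a3 : 2 * `|m * n| <= n ^+ 2 by nia.
nia.
Qed.


Lemma euclid (a b : Z2) : nrm b != 0 -> exists q, `|nrm (zsub a (zmul q b))| < `|nrm b|.
Proof.
move=> nb.
set n := nrm b. set w := zmul a (zconj b).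
have [q1 h1] := round w.1 n nb. have [q2 h2] := round w.2 n nb.
exists (q1, q2).
apply: (eucl_int _ _ (w.1 - q1 * n) (w.2 - q2 * n)) => //.
rewrite /w /n; zr.
Qed.

Lemma zdvd_refl a : zdvd a a. Proof. by exists z1; zr. Qed.
Lemma zdvd0 a : zdvd a (0,0). Proof. by exists (0,0); zr. Qed.
Lemma zdvd_add d a b : zdvd d a -> zdvd d b -> zdvd d (zadd a b).
Proof. by move=> [k ->] [l ->]; exists (zadd k l); zr. Qed.
Lemma zdvd_mull d a c : zdvd d a -> zdvd d (zmul c a).
Proof. by move=> [k ->]; exists (zmul c k); zr. Qed.
Lemma zdvd_trans d a b : zdvd d a -> zdvd a b -> zdvd d b.
Proof. by move=> [k ->] [l ->]; exists (zmul k l); zr. Qed.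

Lemma bezout (a b : Z2) : exists g u v, [/\ zdvd g a, zdvd g b & zadd (zmul u a) (zmul v b) = g].
Proof.
have: forall N a b, (`|nrm b| < N)%N ->
  exists g u v, [/\ zdvd g a, zdvd g b & zadd (zmul u a) (zmul v b) = g]; last first.
  by move=> H; apply: (H (`|nrm b|).+1).
elim=> // N IH {}a {}b hN.
case: (eqVneq (nrm b) 0) => nb.
  rewrite (nrm0 _ nb); exists a, z1, (0,0); split; [exact: zdvd_refl|exact: zdvd0|zr].
have [q hq] := euclid a b nb.
have [g [u [v [ga gb e]]]] := IH b (zsub a (zmul q b)) ltac:(lia).
exists g, v, (zsub u (zmul v q)); split => //.
  have -> : a = zadd (zsub a (zmul q b)) (zmul q b) by zr.
  by apply: zdvd_add => //; apply: zdvd_mull.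
by rewrite -e; zr.
Qed.

Definition zcop z w := exists u v, zadd (zmul u z) (zmul v w) = z1.

Lemma zpowS z n : zpow z n.+1 = zmul z (zpow z n). Proof. by []. Qed.

Lemma zpow_mul a b n : zpow (zmul a b) n = zmul (zpow a n) (zpow b n).
Proof.
elim: n => [|n IH]; first by zr.
rewrite !zpowS IH; move: (zpow a n) (zpow b n) => x y; zr.
Qed.

Lemma zdvd_pow d g n : zdvd d g -> zdvd (zpow d n) (zpow g n).
Proof. by move=> [k ->]; exists (zpow k n); rewrite zpow_mul. Qed.

Lemma cop_pow z w n : zcop z w -> zcop (zpow z n) w.
Proof.
move=> [u [v e]]; elim: n => [|n [u' [v' e']]].
  by exists z1, (0,0); zr.
rewrite zpowS; move: (zpow z n) e' => m e'.
exists (zmul u u'), (zadd (zadd (zmul (zmul u z) v') (zmul v (zmul u' m))) (zmul (zmul v v') w)).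
have -> : z1 = zmul (zadd (zmul u z) (zmul v w)) (zadd (zmul u' m) (zmul v' w)) by rewrite e e'; zr.
zr.
Qed.

Lemma gauss d a b : zcop d b -> zdvd d (zmul a b) -> zdvd d a.
Proof.
move=> [u [v e]] [k ek].
exists (zadd (zmul a u) (zmul v k)).
have E : zadd (zmul (zmul a u) d) (zmul v (zmul a b)) = zmul a (zadd (zmul u d) (zmul v b)) by zr.
rewrite e ek in E.
transitivity (zmul a z1); first by zr.
rewrite -E; zr.
Qed.

Lemma binom al s Y n : exists K, zpow (zadd (zmul s al) Y) n = zadd (zmul al K) (zpow Y n).
Proof.
elim: n => [|n [K e]]; first by exists (0,0); zr.
exists (zadd (zmul (zadd (zmul s al) Y) K) (zmul s (zpow Y n))).
rewrite !zpowS e; move: (zpow Y n) => m; zr.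
Qed.

Lemma zcancel al c : nrm al != 0 -> al = zmul al c -> c = z1.
Proof.
case: al c => a1 a2 [c1 c2] nz; rewrite /zmul /= => [[E1 E2]].
have F1 : nrm (a1, a2) * (c1 - 1) = a1 * (a1 * c1 + 2 * a2 * c2 - a1) - 2 * a2 * (a1 * c2 + a2 * c1 - a2).
  rewrite /nrm /=; ring.
have F2 : nrm (a1, a2) * c2 = a1 * (a1 * c2 + a2 * c1 - a2) - a2 * (a1 * c1 + 2 * a2 * c2 - a1).
  rewrite /nrm /=; ring.
rewrite -E1 -E2 !subrr !mulr0 subrr in F1 F2.
move/eqP: F1; rewrite mulf_eq0 (negPf nz) /= subr_eq0 => /eqP ->.
move/eqP: F2; rewrite mulf_eq0 (negPf nz) /= => /eqP ->.
by [].
Qed.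

Lemma key al be ga n : nrm al != 0 -> zcop al be -> zmul al be = zpow ga n ->
  exists e e' d, zmul e e' = z1 /\ al = zmul e (zpow d n).
Proof.
move=> nz cop E.
have [d [s [t [da dg e]]]] := bezout al ga.
have dcop : zcop d be.
  case: cop => u [v ecop]; case: da => k ek.
  exists (zmul u k), v; rewrite -ecop ek; zr.
have [m em] : zdvd (zpow d n) al.
  apply: (gauss _ _ be); first exact: cop_pow.
  by rewrite E; apply: zdvd_pow.
have [m' em'] : zdvd al (zpow d n).
  have [K eK] := binom al s (zmul t ga) n.
  rewrite -e eK zpow_mul -E.
  exists (zadd K (zmul (zpow t n) be)); zr.
exists m, m', d; split.
  apply: (zcancel al) => //.
  by rewrite {1}em em'; zr.
by rewrite {1}em; zr.
Qed.

Section R.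
Variable R : realType.
Let s : R := sqrt2.
Definition emb (z : Z2) : R := z.1%:~R + z.2%:~R * s.

Lemma s2 : s ^+ 2 = 2. Proof. by rewrite /s /sqrt2 sqr_sqrtr // ler0n. Qed.
Lemma s_gt0 : 0 < s. Proof. by rewrite /s /sqrt2 sqrtr_gt0 ltr0n. Qed.

Lemma emb_mul z w : emb (zmul z w) = emb z * emb w.
Proof.
case: z w => a b [c d]; rewrite /emb /zmul /=.
rewrite !(intrD, intrM) /=.
apply/eqP; rewrite -subr_eq0; apply/eqP.
transitivity (b%:~R * d%:~R * (2%:~R - s ^+ 2)); first ring.
by rewrite s2 subrr mulr0.
Qed.

Lemma emb1 : emb z1 = 1. Proof. by rewrite /emb /= mul0r addr0. Qed.

Lemma emb_pow z n : emb (zpow z n) = emb z ^+ n.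
Proof. elim: n => [|n IH]; first exact: emb1. by rewrite zpowS emb_mul IH exprS. Qed.

Lemma emb_conj_mul z w : emb (zconj (zmul z w)) = emb (zconj z) * emb (zconj w).
Proof. rewrite -emb_mul; congr emb; zr. Qed.

Lemma emb_conj_pow z n : emb (zconj (zpow z n)) = emb (zconj z) ^+ n.
Proof. elim: n => [|n IH]; first exact: emb1. by rewrite zpowS emb_conj_mul IH exprS. Qed.

Let u : R := 1 + s.
Let v : R := 1 - s.

Lemma u_neq0 : u != 0. Proof. rewrite /u; have := s_gt0; apply: contraTneq => h; lra. Qed.
Lemma v_neq0 : v != 0.
Proof. rewrite /v; apply/eqP => h; have e : s = 1 by lra. have := s2; rewrite e expr1n => h2; lra. Qed.

Lemma inv_eq (x y : R) : x != 0 -> x * y = 1 -> x^-1 = y.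
Proof. by move=> x0 e; rewrite -[y]mul1r -(mulVf x0) -mulrA e mulr1. Qed.

Lemma u_inv : u^-1 = emb (-1, 1).
Proof.
apply: inv_eq; first exact: u_neq0.
rewrite /u /emb /=; have := s2; rewrite expr2 => h.
transitivity (s * s - 1); first (rewrite !intrN /=; ring). by rewrite h; lra.
Qed.

Lemma v_inv : v^-1 = emb (zconj (-1, 1)).
Proof.
apply: inv_eq; first exact: v_neq0.
rewrite /v /emb /=; have := s2; rewrite expr2 => h.
transitivity (s * s - 1); first (rewrite !intrN /=; ring). by rewrite h; lra.
Qed.


Definition UP (z : Z2) := exists sg k : int, (sg = 1 \/ sg = -1) /\
  emb z = sg%:~R * u ^ k /\ emb (zconj z) = sg%:~R * v ^ k.

Lemma unit_nonneg N (a b : int) : (`|a| + `|b| < N)%N -> 0 <= a ->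
  (nrm (a, b) = 1 \/ nrm (a, b) = -1) -> UP (a, b).
Proof.
elim: N a b => // N IH a b hN ha hn.
rewrite /nrm /= in hn.
case: (ltrgtP b 0) => hb; last first.
-
  have a1 : a = 1 by subst b; nia.
  exists 1, 0; subst a b; rewrite /emb /= !mul0r !addr0 !mul1r !expr0z; split; [by left|done].
-
  have [h1 h2] : b <= a /\ a < 2 * b by split; nia.
  have [sg [k [hs [e1 e2]]]] := IH (2 * b - a) (a - b) ltac:(lia) ltac:(lia)
     ltac:(rewrite /nrm /=; case: hn => hn; [right|left]; nia).
  have E : (a, b) = zmul (2 * b - a, a - b) (1, 1) by zr.
  exists sg, (k + 1); split => //.
  rewrite E emb_mul emb_conj_mul e1 e2 !expfzDr ?u_neq0 ?v_neq0 // !expr1z -!mulrA.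
  by rewrite /emb /u /v /= !mul1r mulN1r.
-
  have [h1 h2] : - b <= a /\ a < - 2 * b by split; nia.
  have [sg [k [hs [e1 e2]]]] := IH (- (a + 2 * b)) (- (a + b)) ltac:(lia) ltac:(lia)
     ltac:(rewrite /nrm /=; case: hn => hn; [right|left]; nia).
  have E : (a, b) = zmul (- (a + 2 * b), - (a + b)) (1, -1) by zr.
  exists (- sg), (k - 1); split; first by case: hs => ->; [right|left].
  rewrite E emb_mul emb_conj_mul e1 e2 !expfzDr ?u_neq0 ?v_neq0 // !exprN1 u_inv v_inv.
  rewrite /emb /u /v /=; split; rewrite !intrN; ring.
Qed.

Lemma unit_class (z : Z2) : nrm z = 1 \/ nrm z = -1 -> UP z.
Proof.
case: z => a b hn.
case: (lerP 0 a) => ha; first exact: (unit_nonneg (`|a| + `|b|).+1).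
have [sg [k [hs [e1 e2]]]] := unit_nonneg (`|a| + `|b|).+1 (-a) (-b) ltac:(lia) ltac:(lia)
   ltac:(move: hn; rewrite /nrm /= !sqrrN; lia).
exists (- sg), k; split; first by case: hs => ->; [right|left].
have E1 : emb (a, b) = - emb (-a, -b) by rewrite /emb /= !intrN; ring.
have E2 : emb (zconj (a, b)) = - emb (zconj (-a, -b)) by rewrite /emb /= !intrN; ring.
rewrite E1 E2 e1 e2 !intrN; split; ring.
Qed.

Lemma unit_pow (q : int) : exists c, emb c = u ^ q /\ emb (zconj c) = v ^ q.
Proof.
case: q => n.
  exists (zpow (1, 1) n); rewrite emb_pow emb_conj_pow.
  by rewrite /emb /u /v /= !mul1r mulN1r.
exists (zpow (-1, 1) n.+1); rewrite emb_pow emb_conj_pow -u_inv -v_inv.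
by rewrite !exprVn.
Qed.

End R.
Lemma x_odd (x y : int) (p : nat) : (2 <= p)%N -> x ^+ 2 - 2 = y ^+ p -> exists t, x = 2 * t + 1.
Proof.
move=> hp H.
have e := divz_eq x 2. have g := @modz_ge0 x 2 isT. have l := @ltz_pmod x 2 isT.
case: (eqVneq (x %% 2)%Z 1) => hm; first by exists (x %/ 2)%Z; lia.
exfalso.
set t := (x %/ 2)%Z in e.
have hx : x = 2 * t by lia.
have d2 : (2 %| y ^+ p)%Z by apply/dvdzP; exists (2 * t ^+ 2 - 1); rewrite -H hx; ring.
have : (2 %| `|y|)%N.
  have d2' : (2 %| `|y ^+ p|)%N := d2.
  by move: d2'; rewrite abszX Euclid_dvdX // => /andP[].
move=> /dvdnP [k hk].
have d4 : (4 %| y ^+ p)%Z.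
  suff : (4 %| `|y ^+ p|)%N by [].
  rewrite abszX hk expnMn.
  apply: dvdn_mull. rewrite -(subnK hp) expnD. by apply: dvdn_mull.
move/dvdzP: d4 => [m hm4].
move: H; rewrite hm4 hx => H. lia.
Qed.

Lemma odd_div8 (n m m' t : int) : n * m = -8 -> n * m' = 4 * t ^+ 2 + 4 * t - 1 -> n = 1 \/ n = -1.
Proof.
move=> h1 h2.
have e := divz_eq n 2. have g := @modz_ge0 n 2 isT. have l := @ltz_pmod n 2 isT.
set j := (n %/ 2)%Z in e.
have hodd : (n %% 2)%Z = 1.
  case: (eqVneq (n %% 2)%Z 1) => // hm.
  have hn : n = 2 * j by lia.
  rewrite hn in h2. exfalso. nia.
have hm0 : m != 0 by apply/eqP => m0; rewrite m0 mulr0 in h1.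
have hnm : `|n| * `|m| = 8 by rewrite -normrM h1.
have b : `|n| <= 8 by nia.
have : n = -7 \/ n = -5 \/ n = -3 \/ n = -1 \/ n = 1 \/ n = 3 \/ n = 5 \/ n = 7 by lia.
case=> [E|[E|[E|[E|[E|[E|[E|E]]]]]]]; rewrite E in h1; lia.
Qed.

Lemma zpow_real (c : int) n : zpow (c, 0) n = (c ^+ n, 0).
Proof.
elim: n => [|n IH]; first by rewrite /= expr0.
by rewrite zpowS IH /zmul /= exprS !mulr0 !mul0r !addr0.
Qed.

Lemma unit_int (a b : int) : a * b = 1 -> a = 1 \/ a = -1.
Proof.
move=> h; have n : `|a| * `|b| = 1 by rewrite -normrM h.
have ha : a != 0 by apply/eqP => a0; rewrite a0 mul0r in h.
have hb : b != 0 by apply/eqP => b0; rewrite b0 mulr0 in h.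
have h1 : 1 <= `|a| by lia.
have h2 : 1 <= `|b| by lia.
have : `|a| <= 1 by nia.
lia.
Qed.

Theorem theorem3p1 (R : realType) (x y : int) (p : nat) :
  prime p -> (3 <= p)%N -> x ^+ 2 - 2 = y ^+ p ->
  exists a b r : int,
    `|r| <= ((p - 1) %/ 2)%N%:Z /\
    (x%:~R + sqrt2 = (1 + sqrt2) ^ r * (a%:~R + b%:~R * sqrt2) ^+ p :> R) /\
    ((2 * sqrt2)^-1 * ((1 + sqrt2) ^ r * (a%:~R + b%:~R * sqrt2) ^+ p
                       - (1 - sqrt2) ^ r * (a%:~R - b%:~R * sqrt2) ^+ p) = 1 :> R).
Proof.
move=> pp p3 H.
have [t ht] := x_odd x y p (ltnW p3) H.
pose al : Z2 := (x, 1). pose be : Z2 := (x, -1).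
have nalv : nrm al = 4 * t ^+ 2 + 4 * t - 1 by rewrite /nrm /= ht; ring.
have nal : nrm al != 0.
  rewrite nalv; apply/eqP; move: (t ^+ 2) => T. Show. lia.
have cop : zcop al be.
  have [g [u [v [[k1 hk1] [k2 hk2] e]]]] := bezout al be.
  have E8 : zmul g (zsub k1 k2) = (0, 2).
    transitivity (zsub (zmul g k1) (zmul g k2)); first by zr.
    by rewrite -hk1 -hk2 /al /be; zr.
  have n1 : nrm g * nrm (zsub k1 k2) = -8 by rewrite -nrm_mul E8 /nrm /=; ring.
  have n2 : nrm g * nrm k1 = 4 * t ^+ 2 + 4 * t - 1 by rewrite -nrm_mul -hk1.
  have g1 := odd_div8 _ _ _ _ n1 n2.
  pose f := zmul (nrm g, 0) (zconj g).
  exists (zmul f u), (zmul f v).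
  transitivity (zmul f g); first by rewrite -e /f; zr.
  have -> : zmul f g = (nrm g * nrm g, 0) by rewrite /f; zr.
  by case: g1 => ->; rewrite /z1 ?mulrNN mulr1.
have E : zmul al be = zpow (y, 0) p by rewrite zpow_real -H /al /be; zr.
have [e [e' [d [ee' ed]]]] := key al be (y, 0) p nal cop E.
have ne : nrm e = 1 \/ nrm e = -1.
  apply: (unit_int _ (nrm e')); rewrite -nrm_mul ee' /nrm /=; ring.
have [sg [k [hs [e1 e2]]]] := unit_class R e ne.
have p_odd : odd p by case: (even_prime pp) => // p2; rewrite p2 in p3.
set h := ((p - 1) %/ 2)%N.
have m2 : (p %% 2 = 1)%N by rewrite modn2 p_odd.
have ph : p = (2 * h + 1)%N by rewrite /h; lia.
have [q [r [hk hr]]] : exists q r : int, k = q * p%:Z + r /\ `|r| <= h%:Z.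
  have p0 : (p%:Z) != 0 by apply/eqP; lia.
  have e0 := divz_eq k p. have g0 := modz_ge0 k p0. have l0 := @ltz_pmod k p ltac:(lia).
  case: (lerP (k %% p)%Z h) => hr.
    by exists (k %/ p)%Z, (k %% p)%Z; split => //; lia.
  by exists ((k %/ p)%Z + 1), ((k %% p)%Z - p%:Z); split; lia.
have [c [c1 c2]] := unit_pow R q.
pose D := zmul (zmul (sg, 0) c) d.
have U : (1 + sqrt2 : R) != 0 := u_neq0 R.
have V : (1 - sqrt2 : R) != 0 := v_neq0 R.
have sgp : (sg%:~R : R) ^+ p = sg%:~R.
  by case: hs => ->; [rewrite expr1n | rewrite rmorphN1 -signr_odd p_odd expr1].
have esg : emb R (sg, 0) = sg%:~R by rewrite /emb /= mul0r addr0.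
have esgc : emb R (zconj (sg, 0)) = sg%:~R by rewrite /emb /= oppr0 mul0r addr0.
have A : emb R al = (1 + sqrt2) ^ r * emb R D ^+ p.
  rewrite ed emb_mul emb_pow e1 hk expfzDr // -exprz_exp -c1 /D !emb_mul !exprMn esg sgp.
  by rewrite -exprnP; ring.
have B : emb R (zconj al) = (1 - sqrt2) ^ r * emb R (zconj D) ^+ p.
  rewrite ed emb_conj_mul emb_conj_pow e2 hk expfzDr // -exprz_exp -c2 /D !emb_conj_mul !exprMn esgc sgp.
  by rewrite -exprnP; ring.
have Aal : emb R al = x%:~R + sqrt2 by rewrite /emb /= rmorph1 mul1r.
have Bal : emb R (zconj al) = x%:~R - sqrt2 by rewrite /emb /= rmorphN1 mulN1r.
have BD : emb R (zconj D) = D.1%:~R - D.2%:~R * sqrt2 by rewrite /emb /= intrN mulNr.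
exists D.1, D.2, r; split => //.
rewrite -BD; change (D.1%:~R + D.2%:~R * sqrt2) with (emb R D).
rewrite -A -B Aal Bal; split => //.
have s0 : (2 * sqrt2 : R) != 0 by rewrite mulf_neq0 // ?pnatr_eq0 // gt_eqF // (s_gt0 R).
have -> : (x%:~R + sqrt2 - (x%:~R - sqrt2) : R) = 2 * sqrt2 by ring.
by rewrite mulVf.
Qed.
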